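(* Let $r$ be a positive integer, let $G$ be a graph on $n$ vertices, and let $\mathcal{G}_0$ be the auxiliary graph of $G$ defined below. Suppose $\mathcal{G}_0$ has average degree $d>0$. Then there exist $D_1,D_2\geq d/4$ and a non-empty bipartite subgraph $\mathcal{G}$ of $\mathcal{G}_0$ with parts $X_1,X_2$ such that for every $x\in X_1$ we have $d_{\mathcal{G}}(x)\geq\frac{D_1}{256r^2(\log n)^2}$ and $d_{\mathcal{G}_0}(x)\leq D_1$, and for every $x\in X_2$ we have $d_{\mathcal{G}}(x)\geq\frac{D_2}{256r^2(\log n)^2}$ and $d_{\mathcal{G}_0}(x)\leq D_2$.
   Context: Given a graph $G$ and a positive integer $r$, the auxiliary graph $\mathcal{G}_0$ has as vertex set the family of all $r$-element subsets of $V(G)$, and two such sets $U,W$ are adjacent in $\mathcal{G}_0$ if $U\cap W=\emptyset$ and $uw\in E(G)$ for all $u\in U$, $w\in W$. $d_H(x)$ denotes the degree of $x$ in $H$. Logarithms are base $2$. *)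

(* Defs.v *)
From HB Require Import structures.
From mathcomp Require Import all_boot all_order all_algebra.
From mathcomp Require Import all_classical all_reals all_analysis.
Set Implicit Arguments. Unset Strict Implicit. Unset Printing Implicit Defensive.
Import Order.TTheory GRing.Theory Num.Theory.

Definition simple_graph (V : finType) (e : rel V) : Prop :=
  symmetric e /\ irreflexive e.

(* Auxiliary graph G_0: vertices are the r-element subsets of V;
   U ~ W iff U, W disjoint and uw is an edge for all u in U, w in W. *)
Definition aux_adj (V : finType) (e : rel V) (r : nat) (U W : {set V}) : bool :=
  [&& #|U| == r, #|W| == r, [disjoint U & W] &
      [forall u in U, forall w in W, e u w]].

Definition aux_vert (V : finType) (r : nat) : {set {set V}} :=
  [set U : {set V} | #|U| == r].

Definition deg (T : finType) (h : rel T) (x : T) : nat := #|[set y | h x y]|.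

Definition aux_avg_deg (R : realType) (V : finType) (e : rel V) (r : nat) : R :=
  ((\sum_(U in aux_vert V r) deg (aux_adj e r) U)%:R / (#|aux_vert V r|)%:R)%R.

Definition log2 (R : realType) (x : R) : R := (ln x / ln 2)%R.

(* Main.v *)
Require Import Defs.
From HB Require Import structures.
From mathcomp Require Import all_boot all_order all_algebra.
From mathcomp Require Import all_classical all_reals all_analysis.
From mathcomp Require Import lra ring.
Import Order.TTheory GRing.Theory Num.Theory.
Local Open Scope ring_scope.

Definition edg {T : finType} (h : rel T) (A B : {set T}) : nat :=
  (\sum_(a in A) \sum_(b in B) (h a b : nat))%N.

Lemma degE (T : finType) (h : rel T) x : deg h x = (\sum_y (h x y : nat))%N.
Proof.
rewrite /deg -sum1_card big_mkcond /=; apply: eq_bigr => y _.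
by rewrite inE; case: (h x y).
Qed.

Lemma edgE (T : finType) (h : rel T) A B :
  edg h A B = (\sum_x \sum_y (((x \in A) && (y \in B) && h x y) : nat))%N.
Proof.
rewrite /edg big_mkcond /=; apply: eq_bigr => x _.
case: (x \in A) => /=; last by rewrite big1.
rewrite big_mkcond /=; apply: eq_bigr => y _; by case: (y \in B).
Qed.

Lemma dense_sub (R : realType) (T : finType) (h : rel T) (hs : symmetric h)
  (P1 P2 : {set T}) (a1 a2 : R) : 0 <= a2 ->
  a1 * #|P1|%:R + a2 * #|P2|%:R < (edg h P1 P2)%:R ->
  exists A B : {set T}, [/\ A \subset P1, B \subset P2, (0 < #|A|)%N,
   forall x, x \in A -> a1 <= (\sum_(y in B) (h x y : nat))%N%:R &
   forall y, y \in B -> a2 <= (\sum_(x in A) (h y x : nat))%N%:R].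
Proof.
move=> a2ge0 Hpos.
pose f := fun p : {set T} * {set T} =>
  (edg h p.1 p.2)%:R - a1 * #|p.1|%:R - a2 * #|p.2|%:R : R.
pose Q := fun p : {set T} * {set T} => (p.1 \subset P1) && (p.2 \subset P2).
have Q0 : Q (P1, P2) by rewrite /Q /= !subxx.
case: (arg_maxP f Q0) => [[A B] /andP[/= sA sB] maxAB].
have fpos : 0 < f (A, B).
  apply: lt_le_trans (maxAB (P1, P2) Q0); rewrite /f /=; lra.
exists A, B; split => //.
- rewrite lt0n; apply/negP => /eqP/cards0_eq A0.
  move: fpos; rewrite /f /= A0 /edg big_set0 cards0 /=.
  have : 0 <= a2 * #|B|%:R by apply: mulr_ge0.
  lra.
- move=> x xA.
  have Qx : Q (A :\ x, B) by rewrite /Q /= sB andbT (fintype.subset_trans _ sA) // subsetDl.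
  have := maxAB _ Qx; rewrite /f /=.
  rewrite /edg (big_setD1 _ xA) /= (cardsD1 x A) xA /=.
  rewrite !natrD /=; lra.
- move=> y yB.
  have Qy : Q (A, B :\ y) by rewrite /Q /= sA /= (fintype.subset_trans _ sB) // subsetDl.
  have := maxAB _ Qy; rewrite /f /=.
  have -> : edg h A B = (\sum_(x in A) (h y x : nat) + edg h A (B :\ y))%N.
    rewrite /edg -big_split /=; apply: eq_bigr => a _.
    by rewrite (big_setD1 _ yB) /= hs.
  rewrite (cardsD1 y B) yB /= !natrD /=; lra.
Qed.

Lemma bit_diff b : forall a c, (a < 2 ^ b)%N -> (c < 2 ^ b)%N -> a <> c ->
  exists2 k, (k < b)%N & odd (a %/ 2 ^ k) != odd (c %/ 2 ^ k).
Proof.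
elim: b => [|b IH] a c.
  by rewrite expn0 !ltnS !leqn0 => /eqP -> /eqP ->.
move=> ha hc hac.
case: (boolP (odd a == odd c)) => [/eqP hodd|hodd]; last first.
  by exists 0%N; rewrite // expn0 !divn1.
have h2 : a./2 <> c./2.
  move=> h; apply: hac; by rewrite -(odd_double_half a) -(odd_double_half c) hodd h.
have ha' : (a./2 < 2 ^ b)%N by rewrite -divn2 ltn_divLR // -expnSr.
have hc' : (c./2 < 2 ^ b)%N by rewrite -divn2 ltn_divLR // -expnSr.
case: (IH _ _ ha' hc' h2) => k kb hk.
exists k.+1 => //.
by rewrite expnS !divnMA !divn2.
Qed.

Lemma aux_sym (V : finType) (e : rel V) r : simple_graph e ->
  symmetric (aux_adj e r).
Proof.
move=> [es _] U W; rewrite /aux_adj.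
rewrite disjoint_sym; case: (#|U| == r); case: (#|W| == r) => //=.
case: [disjoint W & U] => //=.
apply/forallP/forallP => H x; apply/implyP => xW;
  apply/forallP => y; apply/implyP => yU; rewrite es;
  by move: (H y) => /implyP/(_ yU)/forallP/(_ x)/implyP/(_ xW).
Qed.

Lemma deg_bound (V : finType) (e : rel V) r x :
  (deg (aux_adj e r) x <= #|V| ^ r)%N.
Proof.
apply: (@leq_trans #|[set A : {set V} | #|A| == r]|).
  apply: subset_leq_card; apply/fintype.subsetP => y; rewrite !inE /aux_adj.
  by case/and4P.
rewrite card_draws; apply: (@leq_trans (#|V| ^_ r)).
  by rewrite -bin_ffact leq_pmulr // fact_gt0.
rewrite ffact_prod (_ : #|V| ^ r = \prod_(i < r) #|V|)%N;
  last by rewrite prod_nat_const card_ord.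
by apply: leq_prod => i _; rewrite leq_subr.
Qed.

Lemma log_bound (R : realType) (a n r : nat) : (0 < n)%N ->
  (2 ^ a <= n ^ r)%N -> (a%:R : R) <= r%:R * log2 (n%:R : R).
Proof.
move=> n0 h.
have : ((2 ^ a)%:R : R) <= (n ^ r)%:R by rewrite ler_nat.
rewrite !natrX => h'.
have ln2 : (0 : R) < ln 2 by apply: ln_gt0; lra.
have : ln ((2 : R) ^+ a) <= ln ((n%:R : R) ^+ r).
  rewrite ler_ln // posrE exprn_gt0 // ?ltr0n //.
have n0R : (0 : R) < n%:R by rewrite ltr0n.
have two0 : (0 : R) < 2 by [].
rewrite (lnXn a two0) (lnXn r n0R) /log2.
rewrite -(mulr_natr (ln 2) a) -(mulr_natr (ln n%:R) r) => hl.
by rewrite mulrA (ler_pdivlMr _ _ ln2) mulrC [r%:R * _]mulrC.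
Qed.

Lemma leq_term {I : finType} (F : I -> nat) i0 : (F i0 <= \sum_i F i)%N.
Proof. by rewrite (bigD1 i0) //= leq_addr. Qed.

Lemma swap3 {I J K X : finType} (F : I -> J -> K -> X -> nat) :
  (\sum_i \sum_j \sum_k \sum_x F i j k x = \sum_x \sum_i \sum_j \sum_k F i j k x)%N.
Proof.
under eq_bigr => i _ do under eq_bigr => j _ do rewrite exchange_big.
under eq_bigr => i _ do rewrite exchange_big.
by rewrite exchange_big.
Qed.

Lemma sum3_const (R : realType) (m b : nat) (F : 'I_m -> R) :
  \sum_(i < m) \sum_(j < m) \sum_(k < b) (F i + F j) =
  (2 * b * m)%:R * \sum_i F i.
Proof.
under eq_bigr => i _ do under eq_bigr => j _ do rewrite sumr_const card_ord.
under eq_bigr => i _ do rewrite sumrMnl.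
rewrite sumrMnl.
under eq_bigr => i _ do rewrite big_split /= sumr_const card_ord.
rewrite big_split /= sumrMnl.
rewrite sumr_const card_ord.
set X := \sum_(i < m) F i.
rewrite -(mulr_natl X m) -mulr2n -mulrnA -(mulr_natl _ (_ * b)%N) !natrM; ring.
Qed.

Theorem lemma5p4 (R : realType) (V : finType) (e : rel V) (r : nat) (d : R) :
  simple_graph e -> (0 < r)%N ->
  d = aux_avg_deg R e r -> 0 < d ->
  exists (D1 D2 : R) (X1 X2 : {set {set V}}) (H : rel {set V}),
    d / 4 <= D1 /\ d / 4 <= D2 /\
    X1 \subset aux_vert V r /\ X2 \subset aux_vert V r /\ [disjoint X1 & X2] /\
    (0 < #|X1 :|: X2|)%N /\
    symmetric H /\
    (forall x y, H x y -> aux_adj e r x y /\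
           ((x \in X1 /\ y \in X2) \/ (x \in X2 /\ y \in X1))) /\
    (forall x, x \in X1 ->
       D1 / (256 * r%:R ^+ 2 * (log2 (#|V|%:R : R)) ^+ 2) <= (deg H x)%:R
       /\ (deg (aux_adj e r) x)%:R <= D1) /\
    (forall x, x \in X2 ->
       D2 / (256 * r%:R ^+ 2 * (log2 (#|V|%:R : R)) ^+ 2) <= (deg H x)%:R
       /\ (deg (aux_adj e r) x)%:R <= D2).
Proof.
move=> sg r0 Hd d0.
set adj := aux_adj e r.
have asym : symmetric adj := aux_sym V e r sg.
set n := #|V|.
set Aux := aux_vert V r.
set N := #|Aux|.
set S := (\sum_(U in Aux) deg adj U)%N.
have adjA : forall x y, adj x y -> x \in Aux /\ y \in Aux.
  by move=> x y; rewrite /adj /aux_adj /Aux /aux_vert !inE => /and4P[-> -> _ _].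
have deg0 : forall x, x \notin Aux -> deg adj x = 0%N.
  move=> x xA; rewrite degE big1 // => y _.
  by case: (boolP (adj x y)) => // /adjA[xA' _]; rewrite xA' in xA.
have SE : S = (\sum_x \sum_y (adj x y : nat))%N.
  rewrite /S big_mkcond /=; apply: eq_bigr => x _.
  by case: (boolP (x \in Aux)) => xA; [rewrite degE | rewrite -degE deg0].
have Hd' : d = S%:R / N%:R by rewrite Hd.
have Npos : (0 < N)%N.
  rewrite lt0n; apply/negP => /eqP N0; move: d0; by rewrite Hd' N0 invr0 mulr0 ltxx.
have Spos : (0 < S)%N.
  rewrite lt0n; apply/negP => /eqP S0; move: d0; by rewrite Hd' S0 mul0r ltxx.
have SdN : (S%:R : R) = d * N%:R.
  by rewrite Hd' -mulrA mulVf ?mulr1 // pnatr_eq0 -lt0n.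
have [U0 [W0 adj0]] : exists U W, adj U W.
  case: (pickP (fun U => 0 < deg adj U)%N) => [U hU|h0].
    move: hU; rewrite card_gt0 => /set0Pn[W]; rewrite inE => hW; by exists U, W.
  move: Spos; rewrite /S big1 // => U _; by move: (h0 U) => /= /negbT; rewrite lt0n negbK => /eqP.
have n2 : (2 <= n)%N.
  move: adj0; rewrite /adj /aux_adj => /and4P[/eqP cU /eqP cW dUW _].
  have : (0 < #|U0|)%N by rewrite cU.
  rewrite card_gt0 => /set0Pn[u uU].
  have : (0 < #|W0|)%N by rewrite cW.
  rewrite card_gt0 => /set0Pn[w wW].
  have uw : u != w by apply/eqP => uw; move: wW; by rewrite -uw (disjointFr dUW uU).
  have := max_card [set u; w]; by rewrite cards2 uw.
have n0 : (0 < n)%N by apply: leq_trans n2.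
set L := log2 (n%:R : R).
have L1 : 1 <= L.
  have := log_bound R 1 n 1 n0; rewrite !expn1 mul1r; by apply.
pose c := fun x => trunc_log 2 (deg adj x).
pose m := (trunc_log 2 (n ^ r)).+1.
have cm : forall x, (c x < m)%N.
  by move=> x; rewrite ltnS leq_trunc_log // deg_bound.
have npr : (0 < n ^ r)%N by rewrite expn_gt0 n0.
have mL : (m%:R : R) <= 2 * r%:R * L.
  have h := log_bound R (trunc_log 2 (n ^ r)) n r n0
    (trunc_logP (leqnn 2) npr).
  have r1 : (1 : R) <= r%:R by rewrite ler1n.
  rewrite /m -natr1.
  have : 1 <= r%:R * L by nra.
  move: h; rewrite -/L; lra.
pose b := (trunc_log 2 n).+1.
have bL : (b%:R : R) <= 2 * L.
  have h := log_bound R (trunc_log 2 n) n 1 n0.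
  rewrite expn1 mul1r -/L in h.
  have := h (trunc_logP (leqnn 2) n0).
  rewrite /b -natr1; lra.
pose rk := fun x : {set V} => if [pick u in x] is Some u then val (enum_rank u) else 0%N.
have rkb : forall x, (rk x < 2 ^ b)%N.
  move=> x; apply: (@leq_trans n); last by apply: ltnW; apply: trunc_log_ltn.
  rewrite /rk; case: pickP => [u _|_ //]; exact: ltn_ord.
have rkd : forall x y, adj x y -> rk x <> rk y.
  move=> x y; rewrite /adj /aux_adj => /and4P[/eqP cx /eqP cy dxy _].
  rewrite /rk; case: pickP => [u ux|h]; last first.
    have : (0 < #|x|)%N by rewrite cx.
    by rewrite card_gt0 => /set0Pn[u uin]; move: (h u); rewrite /= uin.
  case: pickP => [w wy|h]; last first.
    have : (0 < #|y|)%N by rewrite cy.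
    by rewrite card_gt0 => /set0Pn[w win]; move: (h w); rewrite /= win.
  move=> /val_inj /enum_rank_inj uw; move: wy; by rewrite -uw (disjointFr dxy ux).
pose bit := fun (k : nat) x => odd (rk x %/ 2 ^ k).
set K := 256 * r%:R ^+ 2 * L ^+ 2.
have rpos : (0 : R) < r%:R by rewrite ltr0n.
have Lpos : 0 < L by lra.
have Kpos : 0 < K.
  rewrite /K; apply: mulr_gt0; last exact: exprn_gt0.
  by apply: mulr_gt0; [lra | exact: exprn_gt0].
pose Dc := fun i : nat => Num.max ((2 ^ i.+1)%N%:R : R) (d / 4).
pose alpha := fun i : nat => Dc i / K.
have Dc0 : forall i, d / 4 <= Dc i by move=> i; rewrite le_max lexx orbT.
have alpha0 : forall i, 0 <= alpha i.
  move=> i; rewrite /alpha divr_ge0 ?ltW //; have := Dc0 i; lra.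
pose pos := fun x => (x \in Aux) && (0 < deg adj x)%N.
pose P1 := fun (i k : nat) => [set x | pos x && (c x == i) && ~~ bit k x].
pose P2 := fun (j k : nat) => [set x | pos x && (c x == j) && bit k x].
have EX : exists (i j : 'I_m) (k : 'I_b),
    alpha i * #|P1 i k|%:R + alpha j * #|P2 j k|%:R < (edg adj (P1 i k) (P2 j k))%:R.
  pose E := fun (i j : 'I_m) (k : 'I_b) => edg adj (P1 i k) (P2 j k).
  pose W := fun (i j : 'I_m) (k : 'I_b) =>
    alpha i * #|P1 i k|%:R + alpha j * #|P2 j k|%:R.
  case: (boolP [exists i : 'I_m, exists j : 'I_m, exists k : 'I_b,
                  W i j k < (E i j k)%:R]) =>
    [/existsP[i /existsP[j /existsP[k h]]]|nEX]; first by exists i, j, k.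
  exfalso.
  have allW : forall i j k, (E i j k)%:R <= W i j k.
    move=> i j k; rewrite leNgt; apply/negP => h; move/negP: nEX; apply.
    by apply/existsP; exists i; apply/existsP; exists j; apply/existsP; exists k.
  pose g := fun (i j : 'I_m) (k : 'I_b) x y =>
    (((x \in P1 i k) && (y \in P2 j k) && adj x y) : nat).
  have LHS : (S <= 2 * \sum_i \sum_j \sum_k E i j k)%N.
    rewrite SE.
    apply: (@leq_trans (\sum_x \sum_y \sum_i \sum_j \sum_k (g i j k x y + g j i k y x))%N).
      apply: leq_sum => x _; apply: leq_sum => y _.
      case: (boolP (adj x y)) => // hxy.
      have [xA yA] := adjA _ _ hxy.
      have dx : (0 < deg adj x)%N.
        rewrite degE; apply: (@leq_trans (adj x y : nat)); last exact: (leq_term (fun y => adj x y : nat) y).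
        by rewrite hxy.
      have dy : (0 < deg adj y)%N.
        rewrite degE; apply: (@leq_trans (adj y x : nat)); last exact: (leq_term (fun x => adj y x : nat) x).
        by rewrite asym hxy.
      have [k0 kb hk] := bit_diff b _ _ (rkb x) (rkb y) (rkd _ _ hxy).
      pose i0 : 'I_m := Ordinal (cm x).
      pose j0 : 'I_m := Ordinal (cm y).
      pose k1 : 'I_b := Ordinal kb.
      apply: leq_trans (leq_term _ i0).
      apply: leq_trans (leq_term _ j0).
      apply: leq_trans (leq_term _ k1).
      rewrite /g /P1 /P2 !inE /pos xA yA dx dy /= !eqxx /= hxy asym hxy /=.
      move: hk; rewrite /bit /=.
      by case: (odd (rk x %/ 2 ^ k0)); case: (odd (rk y %/ 2 ^ k0)).
    have split3 : forall F G : 'I_m -> 'I_m -> 'I_b -> nat,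
      (\sum_i \sum_j \sum_k (F i j k + G i j k) =
       \sum_i \sum_j \sum_k F i j k + \sum_i \sum_j \sum_k G i j k)%N.
      move=> F G; rewrite -big_split; apply: eq_bigr => i _.
      rewrite -big_split; apply: eq_bigr => j _; by rewrite -big_split.
    have pt : forall i j k,
        (\sum_x \sum_y (g i j k x y + g j i k y x) = E i j k + E j i k)%N.
      move=> i j k; rewrite /E !edgE [X in (_ = _ + X)%N]exchange_big -big_split /=.
      by apply: eq_bigr => x _; rewrite -big_split.
    rewrite (_ : (\sum_x \sum_y \sum_i \sum_j \sum_k (g i j k x y + g j i k y x))%N =
        \sum_i \sum_j \sum_k \sum_x \sum_y (g i j k x y + g j i k y x))%N; last first.
      rewrite (swap3 (fun i j k x => \sum_y (g i j k x y + g j i k y x))%N).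
      apply: eq_bigr => x _.
      by rewrite (swap3 (fun i j k y => (g i j k x y + g j i k y x))%N).
    rewrite (_ : (\sum_i \sum_j \sum_k \sum_x \sum_y (g i j k x y + g j i k y x))%N =
        \sum_i \sum_j \sum_k (E i j k + E j i k))%N; last first.
      by apply: eq_bigr => i _; apply: eq_bigr => j _; apply: eq_bigr => k _; exact: pt.
    rewrite split3 [X in (_ + X)%N]exchange_big /= addnn mul2n.
    exact: leqnn.
  pose C := fun i : nat => [set x | pos x && (c x == i)].
  pose w := fun x => (2 * (deg adj x)%:R + d / 4) / K.
  have RHS : \sum_(i < m) \sum_(j < m) \sum_(k < b) W i j k <=
             (2 * b * m)%:R * (9 * S%:R / (4 * K)).
    apply: (@le_trans _ _ (\sum_(i < m) \sum_(j < m) \sum_(k < b)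
              (alpha i * #|C i|%:R + alpha j * #|C j|%:R))).
      apply: ler_sum => i _; apply: ler_sum => j _; apply: ler_sum => k _.
      rewrite /W; apply: lerD; apply: ler_wpM2l => //; rewrite ler_nat;
        apply: subset_leq_card; apply/fintype.subsetP => x;
        by rewrite !inE => /andP[-> _].
    rewrite (sum3_const R m b (fun i => alpha i * #|C i|%:R)).
    apply: ler_wpM2l => //.
    apply: (@le_trans _ _ (\sum_(i < m) \sum_x
              (if pos x && (c x == i) then w x else 0))).
      apply: ler_sum => i _.
      rewrite (_ : alpha i * #|C i|%:R = \sum_(x in C i) alpha i);
        last by rewrite sumr_const mulr_natr.
      rewrite big_mkcond /=.
      apply: ler_sum => x _; rewrite inE; case: ifP => // /andP[px /eqP cx].
      rewrite /alpha /w; apply: ler_wpM2r; first by rewrite invr_ge0 ltW.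
      rewrite ge_max; apply/andP; split; last first.
        have : (0 : R) <= (deg adj x)%:R by [].
        lra.
      move/andP: px => [_ dpos].
      have h1 : (2 ^ (c x) <= deg adj x)%N by apply: trunc_logP.
      have h2 : (2 ^ (c x).+1 <= 2 * deg adj x)%N by rewrite expnS leq_mul2l.
      have : ((2 ^ (c x).+1)%N%:R : R) <= 2 * (deg adj x)%:R by rewrite -natrM ler_nat.
      rewrite cx; lra.
    rewrite exchange_big /=.
    apply: (@le_trans _ _ (\sum_x (if x \in Aux then w x else 0))).
      apply: ler_sum => x _.
      case: (boolP (pos x)) => px /=; last first.
        rewrite big1 //; case: ifP => // _.
        rewrite /w divr_ge0 ?ltW //; have : (0 : R) <= (deg adj x)%:R by [].
        lra.
      move/andP: (px) => [-> _].
      rewrite (eq_bigr (fun i : 'I_m => if i == Ordinal (cm x) then w x else 0)); last first.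
        by move=> i _; rewrite -val_eqE /= eq_sym.
      by rewrite -big_mkcond big_pred1_eq.
    rewrite -big_mkcond /= /w -mulr_suml big_split /= -mulr_sumr sumr_const.
    rewrite -natr_sum -/S -/N ?mul1r.
    have -> : d / 4 *+ N = S%:R / 4 by rewrite -mulr_natr SdN; lra.
    have -> : (2 * S%:R + S%:R / 4) / K = 9 * S%:R / (4 * K).
      by field; rewrite gt_eqF.
    exact: lexx.
  have h1 : (S%:R / 2 : R) <= \sum_(i < m) \sum_(j < m) \sum_(k < b) W i j k.
    apply: (@le_trans _ _ (\sum_(i < m) \sum_(j < m) \sum_(k < b) (E i j k)%:R)); last first.
      by apply: ler_sum => i _; apply: ler_sum => j _; apply: ler_sum => k _.
    under eq_bigr => i _ do under eq_bigr => j _ do rewrite -natr_sum.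
    under eq_bigr => i _ do rewrite -natr_sum.
    rewrite -natr_sum.
    have := LHS; rewrite -(ler_nat R) natrM => hh.
    have : (2 : R) = 2%N%:R by [].
    lra.
  have h2 := le_trans h1 RHS.
  have rL2 : 0 < r%:R * L ^+ 2 by rewrite mulr_gt0 ?exprn_gt0.
  have bm : (b%:R : R) * m%:R <= 4 * r%:R * L ^+ 2.
    have := ler_pM (ler0n R b) (ler0n R m) bL mL.
    rewrite expr2; lra.
  have r1 : (1 : R) <= r%:R by rewrite ler1n.
  have hK : 9 * (b%:R * m%:R) < K.
    rewrite /K.
    have e2 : 256 * r%:R ^+ 2 * L ^+ 2 = 256 * (r%:R * (r%:R * L ^+ 2)) by ring.
    have : r%:R * L ^+ 2 <= r%:R * (r%:R * L ^+ 2) by rewrite ler_peMl // ltW.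
    rewrite e2; lra.
  have Spos' : (0 : R) < S%:R by rewrite ltr0n.
  have e1 : (2 * b * m)%:R * (9 * S%:R / (4 * K)) =
            (9 * (b%:R * m%:R) / K) * (S%:R / 2).
    rewrite !natrM; field; by rewrite gt_eqF.
  have q1 : 9 * (b%:R * m%:R) / K < 1 by rewrite ltr_pdivrMr // mul1r.
  move: h2; rewrite e1; nra.
case: EX => i [j [k HEX]].
have [A [B [sA sB Apos degA degB]]] :=
  dense_sub R _ adj asym (P1 i k) (P2 j k) (alpha i) (alpha j) (alpha0 j) HEX.
have inP1 : forall x, x \in A -> [/\ x \in Aux, (0 < deg adj x)%N, c x = i & ~~ bit k x].
  by move=> x /(fintype.subsetP sA); rewrite inE => /andP[/andP[/andP[-> ->] /eqP ->] ->].
have inP2 : forall x, x \in B -> [/\ x \in Aux, (0 < deg adj x)%N, c x = j & bit k x].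
  by move=> x /(fintype.subsetP sB); rewrite inE => /andP[/andP[/andP[-> ->] /eqP ->] ->].
have dAB : [disjoint A & B].
  rewrite -setI_eq0; apply/eqP/setP => x; rewrite !inE; apply/negP.
  by move=> /andP[/inP1[_ _ _ h1] /inP2[_ _ _ h2]]; rewrite h2 in h1.
pose H := fun x y => (((x \in A) && (y \in B)) || ((x \in B) && (y \in A))) && adj x y.
have degHA : forall x, x \in A -> deg H x = (\sum_(y in B) (adj x y : nat))%N.
  move=> x xA; rewrite degE [RHS]big_mkcond; apply: eq_bigr => y _.
  rewrite /H xA (disjointFr dAB xA) /=; by case: (y \in B).
have degHB : forall y, y \in B -> deg H y = (\sum_(x in A) (adj y x : nat))%N.
  move=> y yB; rewrite degE [RHS]big_mkcond; apply: eq_bigr => x _.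
  have yA : (y \in A) = false.
    by apply/negP => yA; rewrite (disjointFr dAB yA) in yB.
  rewrite /H yB yA /= asym; by case: (x \in A).
have degD : forall x, (deg adj x)%:R <= Dc (c x).
  move=> x; rewrite le_max; apply/orP; left; rewrite ler_nat.
  case: (posnP (deg adj x)) => [->|dpos] //; apply: ltnW; exact: trunc_log_ltn.
exists (Dc i), (Dc j), A, B, H.
split; first exact: Dc0.
split; first exact: Dc0.
split; first by apply/fintype.subsetP => x /inP1[].
split; first by apply/fintype.subsetP => x /inP2[].
split; first exact: dAB.
split.
  move: Apos; rewrite !card_gt0 => /set0Pn[x xA]; apply/set0Pn; exists x.
  by rewrite inE xA.
split.
  move=> x y; rewrite /H asym; congr (_ && _).
  by case: (x \in A); case: (x \in B); case: (y \in A); case: (y \in B).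
split.
  move=> x y /andP[h1 h2]; split => //.
  by case/orP: h1 => /andP[? ?]; [left|right].
split.
  move=> x xA; split; first by rewrite degHA //; exact: degA.
  by have := degD x; case: (inP1 x xA) => _ _ -> _.
move=> x xB; split; first by rewrite degHB //; exact: degB.
by have := degD x; case: (inP2 x xB) => _ _ -> _.
Qed.
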